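(* Assume (R), and let $(\mathbb P^n)_{n\ge1}\subset\mathcal P$ satisfy $\sup_nJ(\mathbb P^n)<\infty$. Define $\lambda_1^n(t):=\frac1d\mathrm{tr}(\bar\Sigma_2(t,X_t)^{-1}\Sigma^{\mathbb P^n}_t)$. Then $\sup_{n\ge1}\mathbb E^{\mathbb P^n}[\int_0^1\lambda_1^n(t)\log\lambda_1^n(t)\,dt]<\infty$ (convention $0\log0=0$).
   Context: $\Omega=C([0,1];\mathbb R^d)$, canonical process $X$. $\mathcal P$ is the set of probability measures $\mathbb P$ on $\Omega$ under which $X$ is a continuous local martingale with $\langle X\rangle_t=\int_0^t\Sigma^{\mathbb P}_sds$, $\Sigma^{\mathbb P}$ progressively measurable with values in $\mathbb S^d_+$. Continuous $\lambda_2:[0,1]\times\mathbb R^d\to(0,\infty)$, $\bar\Sigma_2:[0,1]\times\mathbb R^d\to\mathbb S^d_{++}$; (R): $\underline b\le\lambda_2\le\overline b$ and $\bar\Sigma_2\preceq MI_d$ for constants $0<\underline b\le\overline b$, $M>0$. For $\Sigma_1\in\mathbb S^d_+$, $\lambda_1:=\frac1d\mathrm{tr}(\bar\Sigma_2(t,x)^{-1}\Sigma_1)$, $\bar\Sigma_1:=\Sigma_1/\lambda_1$ if $\Sigma_1\ne0$; $\ell^{\mathrm{tr}}(t,x,\Sigma_1)=\lambda_1\log\frac{\lambda_1}{\lambda_2}-\lambda_1+\lambda_2-\frac{\lambda_1}2\log\det(\bar\Sigma_2^{-1}\bar\Sigma_1)$ on $\mathbb S^d_{++}$, $=\lambda_2(t,x)$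 at $\Sigma_1=0$, $=+\infty$ on singular nonzero $\Sigma_1$. $\xi:C([0,1];\mathbb R^d)\to\mathbb R$ bounded Borel, continuous for the uniform topology; $J(\mathbb P)=\mathbb E^{\mathbb P}[\int_0^1\ell^{\mathrm{tr}}(t,X_t,\Sigma^{\mathbb P}_t)dt+\xi(X)]$. *)

(* Defs.v *)
From HB Require Import structures.
From mathcomp Require Import all_boot all_order all_algebra.
From mathcomp Require Import all_classical all_reals all_analysis.
Set Implicit Arguments. Unset Strict Implicit. Unset Printing Implicit Defensive.
Import Order.TTheory GRing.Theory Num.Theory.
Import numFieldNormedType.Exports.
Local Open Scope classical_set_scope.
Local Open Scope ring_scope.

(* only its values on [0,1] are ever used.              *)
Record cpath (R : realType) (d : nat) := CPath {
  pval : R -> 'rV[R]_d ;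
  pcont : {within `[0%R, 1%R], continuous pval} }.

HB.instance Definition _ (R : realType) d := gen_eqMixin (cpath R d).
HB.instance Definition _ (R : realType) d := gen_choiceMixin (cpath R d).

Lemma const_path_cont (R : realType) d :
  {within `[0%R, 1%R], continuous (fun _ : R => (0 : 'rV[R]_d))}.
Proof. by apply: continuous_subspaceT => x; exact: cvg_cst. Qed.

HB.instance Definition _ (R : realType) d :=
  isPointed.Build (cpath R d) (CPath (@const_path_cont R d)).

Definition coord (R : realType) d (s : R) (i : 'I_d) (w : cpath R d) : R :=
  pval w s ord0 i.

Definition Gcyl (R : realType) d (t : R) : set (set (cpath R d)) :=
  [set A | exists s (i : 'I_d) (B : set R),
     [/\ 0 <= s <= t, measurable B & A = coord s i @^-1` B]].

(* Omega with the Borel sigma-algebra of the uniform topology, i.e. the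
   sigma-algebra generated by the coordinate maps (times in [0,1]). *)
Definition Omega (R : realType) d := g_sigma_algebraType (@Gcyl R d 1).
HB.instance Definition _ (R : realType) d :=
  Measurable.copy (Omega R d) (g_sigma_algebraType (@Gcyl R d 1)).

Definition Xp (R : realType) d (t : R) (w : Omega R d) : 'rV[R]_d := pval w t.

Definition Filt (R : realType) d (t : R) : set (set (Omega R d)) :=
  <<s @Gcyl R d t >>.

Definition Fmeas (R : realType) d (t : R) (f : Omega R d -> R) :=
  forall B : set R, measurable B -> Filt t (f @^-1` B).

Section Processes.
Context (R : realType) (d : nat).
Local Notation Om := (Omega R d).

Definition stopping_time (tau : Om -> R) :=
  (forall w, 0 <= tau w <= 1) /\
  (forall t, 0 <= t <= 1 -> Filt t [set w | tau w <= t]).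

Definition martingale (P : probability Om R) (M : R -> Om -> R) :=
  (forall t, 0 <= t <= 1 -> Fmeas t (M t) /\ P.-integrable setT (EFin \o M t)) /\
  (forall s t (A : set Om), 0 <= s -> s <= t -> t <= 1 -> Filt s A ->
     (\int[P]_(w in A) (M t w)%:E = \int[P]_(w in A) (M s w)%:E)%E).

Definition cont_local_martingale (P : probability Om R) (M : R -> Om -> R) :=
  (forall w, {within `[0%R, 1%R], continuous (fun t => M t w)}) /\
  exists tau : nat -> Om -> R,
    [/\ forall k, stopping_time (tau k),
        forall k w, tau k w <= tau k.+1 w,
        {ae P, forall w, exists k, tau k w = 1} &
        forall k, martingale P (fun t w => M (Num.min t (tau k w)) w - M 0 w)].

Definition prog_rect (t : R) : set (set (R * Om)) :=
  [set C | exists (A : set R) (B : set Om),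
     [/\ measurable A, A `<=` `[0%R, t], Filt t B & C = A `*` B]].

Definition progressive (S : R -> Om -> 'M[R]_d) :=
  forall t, 0 <= t <= 1 -> forall (i j : 'I_d) (B : set R), measurable B ->
    <<s prog_rect t >> [set p : R * Om | 0 <= p.1 <= t /\ B (S p.1 p.2 i j)].

End Processes.

Definition psd (R : realType) n (A : 'M[R]_n) :=
  A^T = A /\ forall v : 'rV[R]_n, 0 <= (v *m A *m v^T) ord0 ord0.
Definition pd (R : realType) n (A : 'M[R]_n) :=
  A^T = A /\ forall v : 'rV[R]_n, v != 0 -> 0 < (v *m A *m v^T) ord0 ord0.

(* The class \mathcal P, with Sigma the density of <X> *)
Definition inPclass (R : realType) d (P : probability (Omega R d) R)
    (Sig : R -> Omega R d -> 'M[R]_d) :=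
  [/\ progressive Sig,
      forall t w, 0 <= t <= 1 -> psd (Sig t w),
      forall i : 'I_d, cont_local_martingale P (fun t w => Xp t w ord0 i) &
      exists Q : 'I_d -> 'I_d -> R -> Omega R d -> R,
        forall i j : 'I_d,
          cont_local_martingale P
            (fun t w => Xp t w ord0 i * Xp t w ord0 j - Q i j t w) /\
          {ae P, forall w, forall t, 0 <= t <= 1 ->
             (@lebesgue_measure R).-integrable `[0%R, t] (fun s => (Sig s w i j)%:E) /\
             (Q i j t w)%:E = (\int[@lebesgue_measure R]_(s in `[0%R, t]) (Sig s w i j)%:E)%E}].

Definition lam1 (R : realType) d (S2 S1 : 'M[R]_d) : R :=
  d%:R^-1 * \tr (invmx S2 *m S1).

(* the cost l^tr(t,x,Sigma1), given lambda2 = lam2 and Sbar2 = S2 at (t,x) *)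
Definition ell_tr (R : realType) d (lam2 : R) (S2 S1 : 'M[R]_d) : \bar R :=
  if S1 == 0 then lam2%:E
  else if S1 \in unitmx then
    let l1 := lam1 S2 S1 in
    let S1b := l1^-1 *: S1 in
    (l1 * ln (l1 / lam2) - l1 + lam2 - l1 / 2 * ln (\det (invmx S2 *m S1b)))%:E
  else +oo%E.

Definition xlogx (R : realType) (x : R) : R := if x == 0 then 0 else x * ln x.

Definition Jcost (R : realType) d (lam2 : R -> 'rV[R]_d -> R)
    (S2 : R -> 'rV[R]_d -> 'M[R]_d) (xi : Omega R d -> R)
    (P : probability (Omega R d) R) (Sig : R -> Omega R d -> 'M[R]_d) : \bar R :=
  (\int[P]_w
     (\int[@lebesgue_measure R]_(t in `[0%R, 1%R])
         ell_tr (lam2 t (Xp t w)) (S2 t (Xp t w)) (Sig t w)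
      + (xi w)%:E))%E.

(* Main.v *)
Require Import Defs.
From HB Require Import structures.
From mathcomp Require Import all_boot all_order all_algebra.
From mathcomp Require Import all_classical all_reals all_analysis.
From mathcomp Require Import spectral.
From mathcomp.real_closed Require Import complex.
From mathcomp.algebra_tactics Require Import ring lra.
Import Order.TTheory GRing.Theory Num.Theory.
Import numFieldNormedType.Exports.
Local Open Scope classical_set_scope.
Local Open Scope ring_scope.
Set Implicit Arguments. Unset Strict Implicit. Unset Printing Implicit Defensive.
Section PA.
Local Open Scope ereal_scope.
Context d (T : measurableType d) (R : realType) (mu : {measure set T -> \bar R}).

Lemma ge0_int_mono (D : set T) (f g : T -> \bar R) :
  (forall x, D x -> 0 <= f x) -> (forall x, D x -> f x <= g x) ->
  \int[mu]_(x in D) f x <= \int[mu]_(x in D) g x.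
Proof.
move=> f0 fg.
have g0 : forall x, D x -> 0 <= g x by move=> x Dx; exact: le_trans (f0 x Dx) (fg x Dx).
rewrite (ge0_integralE _ f0) (ge0_integralE _ g0).
apply: ereal_sup_le => _ [h /= hf <-]; exists h => //= x.
apply: le_trans (hf x) _; rewrite /patch; case: ifP => // /set_mem Dx.
exact: fg.
Qed.

Lemma int_mono (D : set T) (f g : T -> \bar R) :
  (forall x, D x -> f x <= g x) ->
  \int[mu]_(x in D) f x <= \int[mu]_(x in D) g x.
Proof.
move=> fg; rewrite (integralE _ _ f) (integralE _ _ g); apply: leeB.
  apply: ge0_int_mono => x Dx; first exact: funepos_ge0.
  by apply: (@funepos_le _ _ D) => //; [move=> y /set_mem /fg|rewrite inE].
apply: ge0_int_mono => x Dx; first exact: funeneg_ge0.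
by apply: (@funeneg_le _ _ D) => //; [move=> y /set_mem /fg|rewrite inE].
Qed.
End PA.
Import HBSimple HBNNSimple.
Section mk.
Context d (T : measurableType d) (R : realType).
Variables (h c : {nnsfun T >-> R}).
Let m1 : {nnsfun T >-> R} := max_nnsfun h c.
Let nn : @isNonNegFun T R (m1 \- c).
Proof. by split=> x /=; rewrite subr_ge0 le_max lexx orbT. Qed.
#[local] HB.instance Definition _ := nn.
Definition subc_nnsfun : {nnsfun T >-> R} := m1 \- c.
Lemma subc_nnsfunE x : subc_nnsfun x = Num.max (h x) (c x) - c x.
Proof. by []. Qed.
End mk.
Arguments subc_nnsfun {d T R}.
Section PA3.
Local Open Scope ereal_scope.
Context d (T : measurableType d) (R : realType) (mu : {measure set T -> \bar R}).

Lemma int_affine (D : set T) (mD : measurable D) (f : T -> \bar R) (a B : R) :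
  (0 <= a)%R -> (0 <= B)%R -> (forall x, D x -> 0 <= f x) ->
  \int[mu]_(x in D) (a%:E * f x + B%:E) <= a%:E * \int[mu]_(x in D) f x + B%:E * mu D.
Proof.
move=> a0 B0 f0.
have F0 : forall x, D x -> 0 <= a%:E * f x + B%:E.
  by move=> x Dx; rewrite adde_ge0 ?lee_fin// mule_ge0 ?lee_fin// f0.
rewrite (ge0_integralE _ F0).
apply: ge_ereal_sup => _ [h /= hle <-].
pose c := scale_nnsfun (indic_nnsfun R mD) B0.
have cE x : c x = (B * \1_D x)%R by [].
have intc : sintegral mu c = B%:E * mu D.
  by rewrite sintegralrM sintegral_indic.
have hD x : D x -> (h x)%:E <= a%:E * f x + B%:E.
  move=> Dx; have := hle x; rewrite /patch; case: ifP => //.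
  by rewrite mem_set.
have hnD x : ~ D x -> h x = 0%R.
  move=> nDx; have := hle x; rewrite /patch; case: ifP; first by rewrite inE.
  by move=> _; rewrite lee_fin => hx; apply/eqP; rewrite eq_le hx fun_ge0.
have [a00|a_gt0] := eqVneq a 0%R.
  rewrite a00 mul0e.
  rewrite add0e -intc; apply: le_sintegral => x; rewrite cE.
  have [Dx|nDx] := pselect (D x).
    have := hD x Dx; rewrite a00 mul0e.
    by rewrite add0e lee_fin indicE mem_set// mulr1.
  by rewrite hnD// mulr_ge0// ?indic_ge0.
have ap : (0 < a)%R by rewrite lt_def a_gt0.
pose s := subc_nnsfun h c.
have ia0 : (0 <= a^-1)%R by rewrite invr_ge0.
pose k := scale_nnsfun s ia0.
have kf : sintegral mu k <= \int[mu]_(x in D) f x.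
  rewrite (ge0_integralE _ f0); apply: ereal_sup_ubound; exists k => //= x.
  rewrite /patch; case: ifP => [/set_mem Dx|].
    rewrite /k /= measurable_realfun.mindicE mem_set// mulr1.
    have := hD x Dx; move: (f0 x Dx); case: (f x) => [r r0| _ _|//]; last by rewrite leey.
    rewrite -EFinM -EFinD !lee_fin => hr.
    rewrite mulrC ler_pdivrMr// lerBlDr ge_max [(r * a)%R]mulrC hr /=.
    by rewrite lerDr mulr_ge0.
  move=> nDx; rewrite /k /= measurable_realfun.mindicE hnD; last by move=> /mem_set; rewrite nDx.
  by rewrite nDx mulr0 maxxx subrr mulr0.
have hs : sintegral mu h <= sintegral mu (add_nnsfun s c).
  apply: le_sintegral => x /=; rewrite subrK le_max lexx//.
apply: le_trans hs _; rewrite sintegralD// intc leeD2r//.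
have -> : sintegral mu s = a%:E * sintegral mu k.
  rewrite -sintegralrM; apply: eq_sintegral => x /=.
  by rewrite mulrA mulfV ?mul1r.
by rewrite lee_pmul2l ?lte_fin.
Qed.
End PA3.
Section M.
Variable R : realType.
Local Notation C := R[i].
Local Notation Re := (@complex.Re R).
Local Notation Im := (@complex.Im R).
Local Open Scope complex_scope.

Lemma ReD (x y : C) : Re (x + y) = Re x + Re y.
Proof. by case: x; case: y. Qed.
Lemma ImD (x y : C) : Im (x + y) = Im x + Im y.
Proof. by case: x; case: y. Qed.
Lemma ReM (x y : C) : Re (x * y) = Re x * Re y - Im x * Im y.
Proof. by case: x; case: y. Qed.
Lemma ImM (x y : C) : Im (x * y) = Re x * Im y + Im x * Re y.
Proof. by case: x => a b; case: y => c e /=. Qed.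
Lemma Re_sum I (r : seq I) (P : pred I) (F : I -> C) :
  Re (\sum_(i <- r | P i) F i) = \sum_(i <- r | P i) Re (F i).
Proof. exact: (big_morph _ ReD). Qed.
Lemma Im_sum I (r : seq I) (P : pred I) (F : I -> C) :
  Im (\sum_(i <- r | P i) F i) = \sum_(i <- r | P i) Im (F i).
Proof. exact: (big_morph _ ImD). Qed.

Definition toC m n (M : 'M[R]_(m, n)) : 'M[C]_(m, n) := map_mx (real_complex R) M.

Definition qf n (M : 'M[R]_n) (u v : 'rV[R]_n) := (u *m M *m v^T) ord0 ord0.

Lemma qf_sym n (M : 'M[R]_n) u v : M^T = M -> qf M u v = qf M v u.
Proof.
move=> sM; rewrite /qf.
transitivity ((u *m M *m v^T)^T ord0 ord0); first by rewrite [RHS]mxE.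
by rewrite !trmx_mul trmxK sM mulmxA.
Qed.


Lemma pd_unit n (A : 'M[R]_n) : pd A -> A \in unitmx.
Proof.
case=> sA pA; rewrite unitmxE unitfE; apply/negP => /det0P [v v0 vA].
by have := pA v v0; rewrite vA mul0mx mxE ltxx.
Qed.

Lemma pd_ge0 n (A : 'M[R]_n) u : pd A -> 0 <= qf A u u.
Proof.
case=> sA pA; have [->|u0] := eqVneq u 0; last exact/ltW/pA.
by rewrite /qf mul0mx mul0mx mxE.
Qed.

Lemma comb n (X Y Z w : 'rV[R]_n) a b : X = a *: Y - b *: Z ->
  (X *m w^T) ord0 ord0 = a * (Y *m w^T) ord0 ord0 - b * (Z *m w^T) ord0 ord0.
Proof. by move=> ->; rewrite mulmxBl -!scalemxAl !mxE. Qed.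

Lemma combD n (X Y Z w : 'rV[R]_n) a b : X = a *: Y + b *: Z ->
  (X *m w^T) ord0 ord0 = a * (Y *m w^T) ord0 ord0 + b * (Z *m w^T) ord0 ord0.
Proof. by move=> ->; rewrite mulmxDl -!scalemxAl !mxE. Qed.

Lemma eig_real n (A B : 'M[R]_n) (mu : C) (v : 'rV[C]_n) :
  pd A -> B^T = B -> (forall u, 0 <= qf B u u) -> v != 0 ->
  v *m toC (invmx A *m B) = mu *: v -> Im mu = 0 /\ 0 <= Re mu.
Proof.
move=> pdA sB psB v0 hv.
have Au := pd_unit pdA; have sA := pdA.1.
set N := invmx A *m B in hv.
pose x := map_mx Re v; pose y := map_mx Im v.
have hx : x *m N = Re mu *: x - Im mu *: y.
  apply/rowP => j; have := congr1 (fun M : 'rV[C]_n => Re (M ord0 j)) hv.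
  rewrite !mxE Re_sum ReM => <-; apply: eq_bigr => k _.
  by rewrite ReM !mxE /= mulr0 subr0.
have hy : y *m N = Im mu *: x + Re mu *: y.
  apply/rowP => j; have := congr1 (fun M : 'rV[C]_n => Im (M ord0 j)) hv.
  rewrite !mxE Im_sum ImM addrC => <-; apply: eq_bigr => k _.
  by rewrite ImM !mxE /= mulr0 add0r.
pose p := x *m invmx A; pose q := y *m invmx A.
have pA : p *m A = x by rewrite /p mulmxKV.
have qA : q *m A = y by rewrite /q mulmxKV.
have hp : p *m B = Re mu *: (p *m A) - Im mu *: (q *m A).
  by rewrite pA qA -hx /p /N mulmxA.
have hq : q *m B = Im mu *: (p *m A) + Re mu *: (q *m A).
  by rewrite pA qA -hy /q /N mulmxA.
have e1 := comb p hp; have e2 := combD q hq.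
have e3 := comb q hp; have e4 := combD p hq.
have sAqp : qf A q p = qf A p q by apply: qf_sym.
have sBqp : qf B q p = qf B p q by apply: qf_sym.
have xy0 : (x != 0) || (y != 0).
  apply: contraR v0; rewrite negb_or !negbK => /andP [/eqP x0 /eqP y0].
  apply/eqP/rowP => j; have := congr1 (fun M : 'rV[R]_n => M ord0 j) x0.
  have := congr1 (fun M : 'rV[R]_n => M ord0 j) y0; rewrite !mxE.
  by case: (v ord0 j) => a b /= -> ->.
have S0 : 0 < qf A p p + qf A q q.
  case/orP: xy0 => [xn|yn].
    have pn : p != 0 by apply: contraNneq xn => p0; rewrite -pA p0 mul0mx.
    by rewrite ltr_wpDr ?pd_ge0// pdA.2.
  have qn : q != 0 by apply: contraNneq yn => q0; rewrite -qA q0 mul0mx.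
  by rewrite ltr_wpDl ?pd_ge0// pdA.2.
move: e1 e2 e3 e4; rewrite -/(qf B p p) -/(qf B q q) -/(qf B p q).
rewrite -/(qf B q p) -/(qf A p p) -/(qf A q q) -/(qf A p q) -/(qf A q p).
move: (psB p) (psB q) S0 sAqp sBqp.
set a := Re mu; set b := Im mu.
move: (qf B p p) (qf B q q) (qf B p q) (qf B q p) => Bpp Bqq Bpq Bqp.
move: (qf A p p) (qf A q q) (qf A p q) (qf A q p) => App Aqq Apq Aqp.
move=> h1 h2 h3 h4 h5 e1 e2 e3 e4.
have b0 : b * (App + Aqq) = 0 by nra.
have {}b0 : b = 0 by move/eqP: b0; rewrite mulf_eq0 (gt_eqF h3) orbF => /eqP.
split=> //; nra.
Qed.

Lemma toC_tr n (M : 'M[R]_n) : \tr (toC M) = (\tr M)%:C.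
Proof. by rewrite /mxtrace rmorph_sum; apply: eq_bigr => i _; rewrite mxE. Qed.

Lemma toC_det n (M : 'M[R]_n) : \det (toC M) = (\det M)%:C.
Proof. by rewrite /toC det_map_mx. Qed.

Lemma mx_amgm n (A B : 'M[R]_n.+1) : pd A -> B^T = B ->
  (forall u, 0 <= qf B u u) -> B \in unitmx ->
  0 < \tr (invmx A *m B) /\
  \det (invmx A *m B) <= (\tr (invmx A *m B) / n.+1%:R) ^+ n.+1.
Proof.
move=> pdA sB psB Bu.
have Au := pd_unit pdA.
set N := invmx A *m B.
have Nu : N \in unitmx by rewrite unitmx_mul unitmx_inv Au.
set Nc := toC N.
have [P Pu PT] := Schur Nc (ltn0Sn n).
have Pun := unitarymx_unit Pu.
move: PT; rewrite /similar_to conjumx //; set T := P *m Nc *m invmx P => PT.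
have NcT : Nc = invmx P *m T *m P.
  by rewrite /T !mulmxA mulVmx // mul1mx mulmxKV.
have hdet : \det T = \det Nc.
  rewrite /T !det_mulmx det_inv mulrC mulrA mulVf ?mul1r //.
have htr : \tr T = \tr Nc by rewrite /T mxtrace_mulC mulmxA mulVmx // mul1mx.
pose r i := Re (T i i).
have hr i : Im (T i i) = 0 /\ 0 <= r i.
  set c := T i i.
  have : \det (Nc - c%:M) == 0.
    have -> : Nc - c%:M = invmx P *m (T - c%:M) *m P.
      by rewrite NcT mulmxBr mulmxBl mul_mx_scalar -scalemxAl mulVmx // scalemx1.
    rewrite !det_mulmx [\det (T - _)]det_trig; last first.
      apply/is_trig_mxP => j k jk; have /is_trig_mxP Tz := PT.
      have jk' : j != k by apply: contraTneq jk => ->; rewrite ltnn.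
      by rewrite mxE Tz // !mxE (negbTE jk') mulr0n oppr0 addr0.
    rewrite (bigD1 i) //= [(T - _) i i]mxE [X in T i i + X]mxE [X in T i i - X]mxE eqxx mulr1n -/c subrr mul0r mulr0 mul0r.
    by [].
  case/det0P => v v0; rewrite mulmxBr mul_mx_scalar => /eqP; rewrite subr_eq0.
  move=> /eqP hv; exact: eig_real pdA sB psB v0 hv.
have Tr i : T i i = (r i)%:C.
  by have [h _] := hr i; rewrite /r; case: (T i i) h => a b /= ->.
have dN : \det N = \prod_i r i.
  apply: (@complexI R); rewrite -toC_det -/Nc -hdet det_trig // rmorph_prod.
  by apply: eq_bigr => i _; rewrite Tr.
have tN : \tr N = \sum_i r i.
  apply: (@complexI R); rewrite -toC_tr -/Nc -htr rmorph_sum.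
  by apply: eq_bigr => i _; rewrite Tr.
have rpos i : 0 < r i.
  rewrite lt_def (hr i).2 andbT.
  have : \det N != 0 by move: Nu; rewrite unitmxE unitfE.
  by rewrite dN => /prodf_neq0; apply.
split.
  rewrite tN (bigD1 ord0) //= ltr_wpDr // ?rpos //.
  by apply: sumr_ge0 => i _; exact: ltW.
rewrite dN tN.
have := @leif_AGM _ _ (predT : {pred 'I_n.+1}) r.
rewrite cardE /= size_enum_ord => H.
exact: (H (fun i _ => ltW (rpos i))).1.
Qed.

End M.
Section S.
Variable R : realType.

Lemma ln_le_sub1 (y : R) : 0 < y -> ln y <= y - 1.
Proof.
move=> y0; have := @le_ln1Dx R (y - 1).
rewrite addrCA subrr addr0; apply; rewrite ltrBrDl; lra.
Qed.

Lemma xlnx_lb (x a : R) : 0 < x -> - expR (a - 1) <= x * ln x - a * x.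
Proof.
move=> x0; set e := expR (a - 1).
have e0 : 0 < e by apply: expR_gt0.
have y0 : 0 < e / x by apply: divr_gt0.
have := ln_le_sub1 y0; rewrite ln_div ?posrE // /e expRK => h.
have ex : x * (e / x) = e by rewrite mulrC divfK ?gt_eqF.
move: h ex; set z := e / x; set l := ln x => h ex.
have h' : 0 <= (z - 1) - (a - 1 - l) by rewrite subr_ge0.
have := mulr_ge0 (ltW x0) h'.
rewrite !mulrBr ex -/e [a * x]mulrC; lra.
Qed.

Lemma relent (x y : R) : 0 < x -> 0 < y -> 0 <= x * ln (x / y) - x + y.
Proof.
move=> x0 y0; have := ln_le_sub1 (divr_gt0 y0 x0).
rewrite !ln_div ?posrE // => h.
have ex : x * (y / x) = y by rewrite mulrC divfK ?gt_eqF.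
move: h ex; set z := y / x; set l := ln x; set m := ln y => h ex.
have h' : 0 <= (z - 1) - (m - l) by rewrite subr_ge0.
have := mulr_ge0 (ltW x0) h'.
rewrite !mulrBr ex; lra.
Qed.
End S.

Section S2.
Variable R : realType.

Lemma pointwise n (lam2 bu : R) (S2 S1 : 'M[R]_n.+1) :
  0 < lam2 -> lam2 <= bu -> pd S2 -> psd S1 ->
  ((xlogx (lam1 S2 S1))%:E <= 2%:E * ell_tr lam2 S2 S1
     + (expR (2 * (ln bu + 1) - 1))%:E)%E
  /\ (0 <= ell_tr lam2 S2 S1)%E.
Proof.
move=> l0 lb pdS psS; rewrite /ell_tr.
have e0 : 0 < expR (2 * (ln bu + 1) - 1) := expR_gt0 _.
have [->|S0] := eqVneq S1 0.
  rewrite /lam1 mulmx0 mxtrace0 mulr0 /xlogx eqxx.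
  by split; rewrite -?EFinM -?EFinD lee_fin //; [nra | exact: ltW].
case: ifP => Su; last first.
  by split; rewrite ?leey ?le0y // mulry gtr0_sg // mul1e addye// leey.
have [trp amgm] := mx_amgm pdS psS.1 psS.2 Su.
move: trp amgm; rewrite /lam1.
set N := invmx S2 *m S1 => trp amgm.
set l1 := n.+1%:R^-1 * \tr N.
have l1p : 0 < l1 by rewrite mulr_gt0 // invr_gt0 ltr0n.
have hD : \det (invmx S2 *m (l1^-1 *: S1)) <= 1.
  rewrite -scalemxAr -/N detZ exprVn.
  rewrite ler_pdivrMl ?exprn_gt0 // mulr1 /l1 mulrC.
  by [].
have lnD := ln_le0 hD.
move: lnD; set lD := ln _ => lnD.
have xl : xlogx l1 = l1 * ln l1 by rewrite /xlogx gt_eqF.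
rewrite xl ln_div ?posrE //.
have hm : ln lam2 <= ln bu by rewrite ler_ln ?posrE //; apply: lt_le_trans lb.
have hx := xlnx_lb (2 * (ln bu + 1)) l1p.
have hr := relent l1p l0; rewrite ln_div ?posrE // in hr.
have p1 : 0 <= l1 * (ln bu - ln lam2) by rewrite mulr_ge0 ?subr_ge0 // ltW.
have p2 : 0 <= l1 * (- lD) by rewrite mulr_ge0 ?oppr_ge0 // ltW.
split; rewrite -?EFinM -?EFinD lee_fin.
  move: hx hr p1 p2; set e := expR _; set L := ln l1; set m := ln lam2.
  set mb := ln bu => hx hr p1 p2; nra.
move: hr p2; set L := ln l1; set m := ln lam2 => hr p2; nra.
Qed.
End S2.

Unset Implicit Arguments. Set Strict Implicit.

Lemma pointwise' (R : realType) d (d_gt0 : (0 < d)%N) (lam2 bu : R) (S2 S1 : 'M[R]_d) :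
  0 < lam2 -> lam2 <= bu -> pd S2 -> psd S1 ->
  ((xlogx (lam1 S2 S1))%:E <= 2%:E * ell_tr lam2 S2 S1
     + (expR (2 * (ln bu + 1) - 1))%:E)%E
  /\ (0 <= ell_tr lam2 S2 S1)%E.
Proof. by case: d d_gt0 S2 S1 => [//|n] _ S2 S1; exact: pointwise. Qed.

Lemma fin_ineq (R : realType) (x : \bar R) (a c B : R) : 0 <= a -> (x <= c%:E)%E ->
  (0 <= x)%E -> (a%:E * x + B%:E <= (a * c + B)%:E)%E.
Proof.
move=> a0; case: x => [r| |] //.
by rewrite !lee_fin => h1 h2; nra.
Qed.

Unset Implicit Arguments. Set Strict Implicit.

Theorem mainTheorem11 (R : realType) (d : nat) (d_gt0 : (0 < d)%N)
  (lam2 : R -> 'rV[R]_d -> R) (S2 : R -> 'rV[R]_d -> 'M[R]_d)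
  (xi : Omega R d -> R)
  (* continuity of lambda_2 and Sbar_2 on [0,1] x R^d; Sbar_2 positive definite *)
  (lam2_cont : {within [set p : R * 'rV[R]_d | 0 <= p.1 <= 1],
                 continuous (fun p => lam2 p.1 p.2)})
  (S2_cont : {within [set p : R * 'rV[R]_d | 0 <= p.1 <= 1],
                 continuous (fun p => S2 p.1 p.2)})
  (lam2_pos : forall t x, 0 <= t <= 1 -> 0 < lam2 t x)
  (S2_pd : forall t x, 0 <= t <= 1 -> pd (S2 t x))
  (* assumption (R) *)
  (bl bu M : R) (bl_gt0 : 0 < bl) (bl_le_bu : bl <= bu) (M_gt0 : 0 < M)
  (lam2_bnd : forall t x, 0 <= t <= 1 -> bl <= lam2 t x <= bu)
  (S2_bnd : forall t x, 0 <= t <= 1 -> psd (M%:M - S2 t x))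
  (* xi bounded, Borel, continuous for the uniform topology *)
  (xi_bnd : exists K : R, forall w, `|xi w| <= K)
  (xi_meas : measurable_fun setT xi)
  (xi_cont : forall w (e : R), 0 < e -> exists2 del : R, 0 < del &
      forall w', (forall t, 0 <= t <= 1 -> `|Xp t w - Xp t w'| < del) ->
        `|xi w - xi w'| < e)
  (* the sequence (P^n) in \mathcal P, with densities Sigma^{P^n} *)
  (P : nat -> probability (Omega R d) R) (Sig : nat -> R -> Omega R d -> 'M[R]_d)
  (P_in : forall n, inPclass (P n) (Sig n))
  (J_bnd : exists C : R, forall n, (Jcost lam2 S2 xi (P n) (Sig n) <= C%:E)%E) :
  exists C : R, forall n,
    (\int[P n]_w (\int[@lebesgue_measure R]_(t in `[0%R, 1%R])
        (xlogx (lam1 (S2 t (Xp t w)) (Sig n t w)))%:E) <= C%:E)%E.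
Proof.
have [K hK] := xi_bnd; have [C hC] := J_bnd.
have K0 : 0 <= K by apply: le_trans (hK point) ; exact: normr_ge0.
set B := expR (2 * (ln bu + 1) - 1).
have B0 : 0 <= B by apply/ltW/expR_gt0.
exists (2 * (C + K + K) + B) => n.
have [_ Spsd _ _] := P_in n.
set ellf := fun t w => ell_tr (lam2 t (Xp t w)) (S2 t (Xp t w)) (Sig n t w).
set I := fun w => (\int[@lebesgue_measure R]_(t in `[0%R, 1%R]) ellf t w)%E.
have D01 : forall t : R, [set` `[0%R, 1%R]] t -> 0 <= t <= 1.
  by move=> t; rewrite /= in_itv.
have pw t w : [set` `[0%R, 1%R]] t ->
   ((xlogx (lam1 (S2 t (Xp t w)) (Sig n t w)))%:E <= 2%:E * ellf t w + B%:E)%E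
   /\ (0 <= ellf t w)%E.
  move=> /D01 t01; have /andP [bl2 b2u] := lam2_bnd t (Xp t w) t01.
  exact: (@pointwise' R d d_gt0 _ bu _ _ (lam2_pos _ _ t01) b2u (S2_pd _ _ t01) (Spsd _ _ t01)).
have I0 w : (0 <= I w)%E by apply: integral_ge0 => t Dt; exact: (pw t w Dt).2.
have leb1 : (@lebesgue_measure R `[0%R, 1%R] = 1)%E.
  by rewrite lebesgue_measure_itv /= lte_fin ltr01 oppr0 adde0.
have step1 w : (\int[@lebesgue_measure R]_(t in `[0%R, 1%R])
        (xlogx (lam1 (S2 t (Xp t w)) (Sig n t w)))%:E <= 2%:E * I w + B%:E)%E.
  have H := int_mono (@lebesgue_measure R) (fun t Dt => (pw t w Dt).1).
  apply: le_trans H _.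
  have H2 := @int_affine _ _ _ (@lebesgue_measure R) _ (measurable_itv `[0%R,1%R])
     (ellf^~ w) 2 B (ler0n _ 2) B0 (fun t Dt => (pw t w Dt).2).
  have E m : m = 1%E -> (2%:E * I w + B%:E * m <= 2%:E * I w + B%:E)%E.
    by move=> ->; rewrite mule1.
  apply: (le_trans H2); apply: E; exact: leb1.
have step2 : (\int[P n]_w I w <= (C + K + K)%:E)%E.
  pose h w := (I w + (xi w)%:E)%E.
  have hJ : (\int[P n]_w h w <= C%:E)%E by exact: hC n.
  have xiK w : - K <= xi w by have := hK w; rewrite ler_norml => /andP[].
  have hneg w : (h^\- w <= K%:E)%E.
    rewrite funenegE ge_max lee_fin K0 andbT leeNl /h -[X in (X <= _)%E]add0e.
    by apply: leeD; [exact: I0 | rewrite -EFinN lee_fin].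
  have intneg : (\int[P n]_w h^\- w <= K%:E)%E.
    apply: le_trans (int_mono (P n) (fun w (_ : setT w) => hneg w)) _.
    rewrite integral_cst //.
    have E m : m = 1%E -> (K%:E * m <= K%:E)%E by move=> ->; rewrite mule1.
    apply: E; exact: probability_setT.
  have intneg0 : (0 <= \int[P n]_w h^\- w)%E.
    by apply: integral_ge0 => w _; exact: funeneg_ge0.
  have fin : (\int[P n]_w h^\- w)%E \is a fin_num.
    by rewrite ge0_fin_numE // (le_lt_trans intneg) ?ltry.
  have intpos : (\int[P n]_w h^\+ w <= (C + K)%:E)%E.
    move: hJ; rewrite integralE leeBlDr // => H.
    by apply: le_trans H _; rewrite EFinD; exact: leeD2l.
  have Ile w : (I w <= 1%:E * h^\+ w + K%:E)%E.
    rewrite mul1e; apply: (@le_trans _ _ (h w + K%:E)%E).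
      rewrite /h -addeA leeDl // -EFinD lee_fin; have := xiK w; lra.
    by apply: leeD2r; rewrite funeposE le_max lexx.
  apply: le_trans (int_mono (P n) (fun w _ => Ile w)) _.
  have H4 := @int_affine _ _ _ (P n) setT measurableT (fun w => (h^\+ w)%E) 1 K ler01 K0
     (fun w _ => funepos_ge0 h w).
  apply: (le_trans H4).
  have E m : m = 1%E -> (1%:E * \int[P n]_w h^\+ w + K%:E * m <= (C + K + K)%:E)%E.
    by move=> ->; rewrite mule1 mul1e EFinD; exact: leeD2r.
  apply: E; exact: probability_setT.
apply: le_trans (int_mono _ (fun w _ => step1 w)) _.
have H3 := @int_affine _ _ _ (P n) setT measurableT I 2 B (ler0n _ 2) B0
  (fun w _ => I0 w).
apply: (le_trans H3).
have E m : m = 1%E -> (2%:E * \int[P n]_w I w + B%:E * m <= (2 * (C + K + K) + B)%:E)%E.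
  move=> ->; rewrite mule1; apply: (fin_ineq _ _ _ _ _ (ler0n _ 2) step2).
  by apply: integral_ge0 => w _; exact: I0.
apply: E; exact: probability_setT.
Qed.
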